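(* Let $N\ge1$, $\alpha>0$, $\tau_0\ge0$, let $c_1,\dots,c_N\in\mathbb{C}\setminus\{0\}$ and let $\mu_1,\dots,\mu_N\in\mathbb{C}$ be pairwise distinct. Let $h:=\tau_0+2$, $Y:=C([-1,1];\mathbb{C})$, $X:=C([-h,0];Y)$ (supremum norms), $J(x,r):=\sum_{i=1}^Nc_ie^{-\mu_i|x-r|}$, and define $L\in\mathcal{L}(X,Y)$ by $(L\phi)(x):=\int_{-1}^1J(x,r)\,\phi(-\tau_0-|x-r|,r)\,dr$. Let $A$ be the operator on $X$ with $D(A)=\{\phi\in X:\phi'\in X,\ \phi'(0)=-\alpha\phi(0)+L\phi\}$, $A\phi=\phi'$. For $\lambda\in\mathbb{C}$ put $k_j(\lambda):=\lambda+\mu_j$, $\mathcal{S}:=\{\lambda:k_i^2=k_j^2\text{ for some }i\neq j\}$ and $$\mathcal{P}(\rho):=\frac{e^{\lambda\tau_0}(\lambda+\alpha)}{2}\prod_{j=1}^N(\rho^2-k_j(\lambda)^2)+\sum_{i=1}^Nc_ik_i(\lambda)\prod_{j\neq i}(\rho^2-k_j(\lambda)^2).$$ Suppose $\lambda\notin\mathcal{S}$ and that $\mathcal{P}$ has $2N$ distinct roots, denoted $\pm\rho_i(\lambda)$, $i=1,\dots,N$. Define the $2N\times2N$ matrix $$S(\lambda):=\begin{bmatrix}S^-_\lambda&S^+_\lambda\\S^+_\lambda&S^-_\lambda\end{bmatrix},\qquad [S^-_\lambda]_{j,i}:=\frac{e^{\rho_i(\lambda)}}{\lambda+\mu_j-\rho_i(\lambda)},\quad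 [S^+_\lambda]_{j,i}:=\frac{e^{-\rho_i(\lambda)}}{\lambda+\mu_j+\rho_i(\lambda)}.$$ If $\det S(\lambda)=0$ and $k_j(\lambda)\neq\pm\rho_i(\lambda)$ for all $i,j=1,\dots,N$, then $\lambda$ belongs to the point spectrum of $A$, and a corresponding eigenfunction is $\varepsilon_\lambda\otimes q_\lambda$, where $$q_\lambda(x)=\sum_{i=1}^N\big[\gamma_ie^{\rho_i(\lambda)x}+\gamma_{-i}e^{-\rho_i(\lambda)x}\big],\qquad x\in[-1,1],$$ and $\Gamma_\lambda=[\gamma_1,\dots,\gamma_N,\gamma_{-1},\dots,\gamma_{-N}]$ is a non-trivial solution of $S(\lambda)\Gamma_\lambda=0$.
   Context: $(\varepsilon_\lambda\otimes q)(\theta):=e^{\lambda\theta}q$ for $\theta\in[-h,0]$. The operator $A$ generates the semigroup of the linearised neural field equation $\dot V(t)=-\alpha V(t)+LV_t$ on $[-1,1]$ with delay $\tau(x,r)=\tau_0+|x-r|$. *)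

(* Defs.v *)
From HB Require Import structures.
From mathcomp Require Import all_boot all_order all_algebra.
From mathcomp Require Import all_classical all_reals all_analysis.
From mathcomp Require Import complex.
Set Implicit Arguments. Unset Strict Implicit. Unset Printing Implicit Defensive.
Import Order.TTheory GRing.Theory Num.Theory.
Local Open Scope ring_scope.
Local Open Scope complex_scope.

Section NeuralFieldDefs.
Variable R : realType.
Local Notation C := R[i].

Definition cexp (z : C) : C :=
  (expR (complex.Re z))%:C * (cos (complex.Im z) +i* sin (complex.Im z)).

Definition cint11 (f : R -> C) : C :=
  (Rintegral (@lebesgue_measure R) [set x : R | -1 <= x <= 1]
      (fun r => complex.Re (f r)))
  +i* (Rintegral (@lebesgue_measure R) [set x : R | -1 <= x <= 1]
      (fun r => complex.Im (f r))).

Definition in_Y (q : R -> C) : Prop :=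
  forall x, -1 <= x <= 1 -> forall e : R, 0 < e -> exists2 d : R, 0 < d &
    forall y, -1 <= y <= 1 -> `|y - x| < d -> `|q y - q x| < e%:C.

(** X = C([-h,0]; Y) with sup norm on Y; elements are phi : theta |-> (x |-> phi theta x) *)
Definition in_X (h : R) (phi : R -> R -> C) : Prop :=
  (forall th, -h <= th <= 0 -> in_Y (phi th)) /\
  (forall th, -h <= th <= 0 -> forall e : R, 0 < e -> exists2 d : R, 0 < d &
    forall th', -h <= th' <= 0 -> `|th' - th| < d ->
      forall x, -1 <= x <= 1 -> `|phi th' x - phi th x| <= e%:C).

(** psi is the derivative of phi : [-h,0] -> Y (in the sup norm of Y;
    one-sided at the endpoints) *)
Definition is_derX (h : R) (phi psi : R -> R -> C) : Prop :=
  forall th, -h <= th <= 0 -> forall e : R, 0 < e -> exists2 d : R, 0 < d &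
    forall t, -h <= th + t <= 0 -> 0 < `|t| < d ->
      forall x, -1 <= x <= 1 ->
        `|(phi (th + t) x - phi th x) / t%:C - psi th x| <= e%:C.

Definition Jker (N : nat) (c mu : 'I_N -> C) (x r : R) : C :=
  \sum_(i < N) c i * cexp (- mu i * (`|x - r|)%:C).

Definition Lop (N : nat) (c mu : 'I_N -> C) (tau0 : R) (phi : R -> R -> C)
    (x : R) : C :=
  cint11 (fun r => Jker c mu x r * phi (- tau0 - `|x - r|) r).

(** phi in D(A) and A phi = psi, where D(A) = {phi in X : phi' in X,
    phi'(0) = -alpha phi(0) + L phi} and A phi = phi' *)
Definition A_graph (N : nat) (alpha tau0 : R) (c mu : 'I_N -> C)
    (phi psi : R -> R -> C) : Prop :=
  let h := tau0 + 2 in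
  [/\ in_X h phi, in_X h psi, is_derX h phi psi &
      forall x, -1 <= x <= 1 ->
        psi 0 x = - alpha%:C * phi 0 x + Lop c mu tau0 phi x].

Definition is_eigenfunction (N : nat) (alpha tau0 : R) (c mu : 'I_N -> C)
    (lam : C) (phi : R -> R -> C) : Prop :=
  A_graph alpha tau0 c mu phi (fun th x => lam * phi th x) /\
  exists th x, [/\ - (tau0 + 2) <= th <= 0, -1 <= x <= 1 & phi th x != 0].

Definition in_point_spectrum (N : nat) (alpha tau0 : R) (c mu : 'I_N -> C)
    (lam : C) : Prop :=
  exists phi, is_eigenfunction alpha tau0 c mu lam phi.

Definition eps_tensor (lam : C) (q : R -> C) : R -> R -> C :=
  fun th x => cexp (lam * th%:C) * q x.

Definition kk (N : nat) (mu : 'I_N -> C) (lam : C) (j : 'I_N) : C := lam + mu j.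

Definition Pchar (N : nat) (alpha tau0 : R) (c mu : 'I_N -> C) (lam rho : C) : C :=
  cexp (lam * tau0%:C) * (lam + alpha%:C) / 2%:R
     * \prod_(j < N) (rho ^+ 2 - kk mu lam j ^+ 2)
  + \sum_(i < N) c i * kk mu lam i
       * \prod_(j < N | j != i) (rho ^+ 2 - kk mu lam j ^+ 2).

Definition Sminus (N : nat) (mu : 'I_N -> C) (lam : C) (rho : 'I_N -> C) : 'M[C]_N :=
  \matrix_(j < N, i < N) (cexp (rho i) / (lam + mu j - rho i)).
Definition Splus (N : nat) (mu : 'I_N -> C) (lam : C) (rho : 'I_N -> C) : 'M[C]_N :=
  \matrix_(j < N, i < N) (cexp (- rho i) / (lam + mu j + rho i)).
Definition Smat (N : nat) (mu : 'I_N -> C) (lam : C) (rho : 'I_N -> C) : 'M[C]_(N + N) :=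
  block_mx (Sminus mu lam rho) (Splus mu lam rho)
           (Splus mu lam rho) (Sminus mu lam rho).

(** q_lam(x) = sum_i gamma_i e^{rho_i x} + gamma_{-i} e^{-rho_i x},
    with Gamma = [gamma_1..gamma_N, gamma_{-1}..gamma_{-N}] *)
Definition qfun (N : nat) (rho : 'I_N -> C) (Gam : 'cV[C]_(N + N)) (x : R) : C :=
  \sum_(i < N) (Gam (lshift N i) 0 * cexp (rho i * x%:C)
                + Gam (rshift N i) 0 * cexp (- rho i * x%:C)).

End NeuralFieldDefs.

(* Main.v *)
Require Import Defs.
From HB Require Import structures.
From mathcomp Require Import all_boot all_order all_algebra.
From mathcomp Require Import all_classical all_reals all_analysis.
From mathcomp Require Import complex.
From mathcomp Require Import ring lra.
Import Order.TTheory GRing.Theory Num.Theory.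
Import numFieldNormedType.Exports.
Set Implicit Arguments. Unset Strict Implicit.
Local Open Scope ring_scope.
Local Open Scope complex_scope.

Section S1.
Variable R : realType.
Local Notation C := R[i].
Local Notation cRe := (@complex.Re R).
Local Notation cIm := (@complex.Im R).

Lemma cReM (u v : C) : cRe (u * v) = cRe u * cRe v - cIm u * cIm v.
Proof. by case: u => a b; case: v => c d. Qed.
Lemma cImM (u v : C) : cIm (u * v) = cRe u * cIm v + cIm u * cRe v.
Proof. by case: u => a b; case: v => c d. Qed.
Lemma cReD (u v : C) : cRe (u + v) = cRe u + cRe v.
Proof. by case: u => a b; case: v => c d. Qed.
Lemma cImD (u v : C) : cIm (u + v) = cIm u + cIm v.
Proof. by case: u => a b; case: v => c d. Qed.
Lemma cReN (u : C) : cRe (- u) = - cRe u.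
Proof. by case: u. Qed.
Lemma cImN (u : C) : cIm (- u) = - cIm u.
Proof. by case: u. Qed.
Lemma cReR (a : R) : cRe (a%:C) = a. Proof. by []. Qed.
Lemma cImR (a : R) : cIm (a%:C) = 0. Proof. by []. Qed.

Lemma Recexp (w : C) : cRe (cexp w) = expR (cRe w) * cos (cIm w).
Proof. by rewrite /cexp cReM /= mul0r subr0. Qed.
Lemma Imcexp (w : C) : cIm (cexp w) = expR (cRe w) * sin (cIm w).
Proof. by rewrite /cexp cImM /= mul0r addr0. Qed.

Lemma cexpE (w : C) : cexp w = (expR (cRe w) * cos (cIm w)) +i* (expR (cRe w) * sin (cIm w)).
Proof. by rewrite -Recexp -Imcexp; case: (cexp w). Qed.

Lemma cexpD (u v : C) : cexp (u + v) = cexp u * cexp v.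
Proof.
rewrite !cexpE cReD cImD expRD cosD sinD; apply/eqP; rewrite eq_complex /=.
apply/andP; split; apply/eqP; ring.
Qed.

Lemma cexp0 : cexp (0 : C) = 1.
Proof. by rewrite cexpE /= expR0 cos0 sin0 mul1r mulr0. Qed.

Lemma cexpN (u : C) : cexp (- u) = (cexp u)^-1.
Proof.
have h : cexp (- u) * cexp u = 1 by rewrite -cexpD addNr cexp0.
have nz : cexp u != 0.
  apply/eqP => e; move: h; rewrite e mulr0 => /eqP; rewrite eq_sym oner_eq0.
  by [].
by apply: (mulIf nz); rewrite h mulVf.
Qed.

Lemma cexp_neq0 (u : C) : cexp u != 0.
Proof.
apply/negP => /eqP e.
have : cexp (- u) * cexp u = 1 by rewrite -cexpD addNr cexp0.
by rewrite e mulr0 => /eqP; rewrite eq_sym oner_eq0.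
Qed.

Lemma cexpMn (u : C) n : cexp (u *+ n) = cexp u ^+ n.
Proof. by elim: n => [|n IH]; rewrite ?mulr0n ?expr0 ?cexp0 // mulrS exprS cexpD IH. Qed.

End S1.

Section S2.
Variable R : realType.
Local Notation C := R[i].
Local Notation cRe := (@complex.Re R).
Local Notation cIm := (@complex.Im R).

Lemma is_derive_scal (a r : R) : is_derive r 1 (fun t : R => a * t) a.
Proof.
have := @is_deriveZ R R R id a r 1 1 (is_derive_id r 1).
by rewrite /GRing.scale /= mulr1.
Qed.

Lemma is_derive_expcos (a b r : R) :
  is_derive r 1 (fun t => expR (a * t) * cos (b * t))
    (a * (expR (a * r) * cos (b * r)) - b * (expR (a * r) * sin (b * r))).
Proof.
have h1 : is_derive r 1 (fun t => expR (a * t)) (expR (a * r) * a).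
  exact: (@is_derive1_comp R expR (fun t => a * t) r _ _ _ (is_derive_scal a r)).
have h2 : is_derive r 1 (fun t => cos (b * t)) (- sin (b * r) * b).
  exact: (@is_derive1_comp R cos (fun t => b * t) r _ _ _ (is_derive_scal b r)).
have H := is_deriveM h1 h2.
have -> : (fun t => expR (a * t) * cos (b * t)) =
  ((fun t => expR (a * t)) * (fun t => cos (b * t)))%R by apply: funext.
refine (is_derive_eq H _).
rewrite /GRing.scale /=; ring.
Qed.


Lemma is_derive_expsin (a b r : R) :
  is_derive r 1 (fun t => expR (a * t) * sin (b * t))
    (a * (expR (a * r) * sin (b * r)) + b * (expR (a * r) * cos (b * r))).
Proof.
have h1 : is_derive r 1 (fun t => expR (a * t)) (expR (a * r) * a).
  exact: (@is_derive1_comp R expR (fun t => a * t) r _ _ _ (is_derive_scal a r)).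
have h2 : is_derive r 1 (fun t => sin (b * t)) (cos (b * r) * b).
  exact: (@is_derive1_comp R sin (fun t => b * t) r _ _ _ (is_derive_scal b r)).
have H := is_deriveM h1 h2.
have -> : (fun t => expR (a * t) * sin (b * t)) =
  ((fun t => expR (a * t)) * (fun t => sin (b * t)))%R by apply: funext.
refine (is_derive_eq H _).
rewrite /GRing.scale /=; ring.
Qed.

Definition cderiv (F : R -> C) (r : R) (d : C) : Prop :=
  is_derive r 1 (fun t => cRe (F t)) (cRe d) /\
  is_derive r 1 (fun t => cIm (F t)) (cIm d).

Lemma cderiv_ext F G r d : (forall t, F t = G t) -> cderiv F r d -> cderiv G r d.
Proof. by move=> e; have -> : G = F by apply: funext => t; rewrite e. Qed.

Lemma cderiv_cexp (z : C) r : cderiv (fun t => cexp (z * t%:C)) r (z * cexp (z * r%:C)).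
Proof.
have eRe t : cRe (z * t%:C) = cRe z * t by rewrite cReM /= mulr0 subr0.
have eIm t : cIm (z * t%:C) = cIm z * t by rewrite cImM /= mulr0 add0r.
split.
- have -> : (fun t => cRe (cexp (z * t%:C))) =
     (fun t => expR (cRe z * t) * cos (cIm z * t)).
    by apply: funext => t; rewrite Recexp eRe eIm.
  refine (is_derive_eq (is_derive_expcos _ _ r) _).
  by rewrite cReM Recexp Imcexp eRe eIm.
- have -> : (fun t => cIm (cexp (z * t%:C))) =
     (fun t => expR (cRe z * t) * sin (cIm z * t)).
    by apply: funext => t; rewrite Imcexp eRe eIm.
  refine (is_derive_eq (is_derive_expsin _ _ r) _).
  by rewrite cImM Recexp Imcexp eRe eIm.
Qed.

Lemma cderivD F G r dF dG : cderiv F r dF -> cderiv G r dG ->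
  cderiv (fun t => F t + G t) r (dF + dG).
Proof.
move=> [h1 h2] [h3 h4]; split.
- have -> : (fun t => cRe (F t + G t)) = ((fun t => cRe (F t)) + (fun t => cRe (G t)))%R.
    by apply: funext => t; rewrite cReD.
  by refine (is_derive_eq (is_deriveD h1 h3) _); rewrite cReD.
- have -> : (fun t => cIm (F t + G t)) = ((fun t => cIm (F t)) + (fun t => cIm (G t)))%R.
    by apply: funext => t; rewrite cImD.
  by refine (is_derive_eq (is_deriveD h2 h4) _); rewrite cImD.
Qed.

Lemma cderiv_cst (k : C) r : cderiv (fun _ => k) r 0.
Proof. by split; apply: is_derive_cst. Qed.

Lemma cderivZ (k : C) F r d : cderiv F r d -> cderiv (fun t => k * F t) r (k * d).
Proof.
move=> [h1 h2].
have a1 := is_deriveZ (cRe k) h1. have a2 := is_deriveZ (cIm k) h2.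
have a3 := is_deriveZ (cIm k) h1. have a4 := is_deriveZ (cRe k) h2.
split.
- have -> : (fun t => cRe (k * F t)) =
     ((cRe k *: (fun t => cRe (F t))) - (cIm k *: (fun t => cIm (F t))))%R.
    by apply: funext => t; rewrite cReM.
  by refine (is_derive_eq (is_deriveB a1 a2) _); rewrite cReM.
- have -> : (fun t => cIm (k * F t)) =
     ((cRe k *: (fun t => cIm (F t))) + (cIm k *: (fun t => cRe (F t))))%R.
    by apply: funext => t; rewrite cImM.
  by refine (is_derive_eq (is_deriveD a4 a3) _); rewrite cImM.
Qed.

Lemma cderiv_sum (I : finType) (P : pred I) (F : I -> R -> C) r (d : I -> C) :
  (forall i, cderiv (F i) r (d i)) ->
  cderiv (fun t => \sum_(i | P i) F i t) r (\sum_(i | P i) d i).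
Proof.
move=> H.
suff: forall s : seq I, cderiv (fun t => \sum_(i <- s | P i) F i t) r (\sum_(i <- s | P i) d i).
  by apply.
elim => [|i s IH].
  rewrite big_nil; apply: cderiv_ext (cderiv_cst 0 r) => t; by rewrite big_nil.
rewrite big_cons.
have -> : (fun t => \sum_(j <- i :: s | P j) F j t) = (fun t => if P i then
  F i t + \sum_(j <- s | P j) F j t else \sum_(j <- s | P j) F j t).
  by apply: funext => t; rewrite big_cons.
by case: (P i) => //; exact: cderivD.
Qed.

End S2.

Section S3.
Variable R : realType.
Local Notation C := R[i].
Local Notation cRe := (@complex.Re R).
Local Notation cIm := (@complex.Im R).

Definition ccont (f : R -> C) : Prop :=
  continuous (fun t : R => cRe (f t)) /\ continuous (fun t : R => cIm (f t)).

Lemma der_cont (f : R -> R) : (forall x : R, exists d : R, is_derive x 1 f d) -> continuous f.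
Proof.
move=> H x; have [d [hd _]] := H x.
by apply/differentiable_continuous/derivable1_diffP.
Qed.

Lemma ccont_cderiv (F : R -> C) : (forall x : R, exists d : C, cderiv F x d) -> ccont F.
Proof.
move=> H; split; apply: der_cont => x; have [d [h1 h2]] := H x.
  by exists (cRe d). by exists (cIm d).
Qed.

Lemma ccont_ext (F G : R -> C) : (forall t, F t = G t) -> ccont F -> ccont G.
Proof. by move=> e; have -> : G = F by apply: funext => t; rewrite e. Qed.

Lemma ccont_cst (k : C) : ccont (fun _ => k).
Proof. by split => x; apply: cst_continuous. Qed.

Lemma ccontD (F G : R -> C) : ccont F -> ccont G -> ccont (fun t => F t + G t).
Proof.
move=> [h1 h2] [h3 h4]; split => x.
- have -> : (fun t => cRe (F t + G t)) = ((fun t => cRe (F t)) + (fun t => cRe (G t)))%R.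
    by apply: funext => t; rewrite cReD.
  exact: (continuousD (h1 x) (h3 x)).
- have -> : (fun t => cIm (F t + G t)) = ((fun t => cIm (F t)) + (fun t => cIm (G t)))%R.
    by apply: funext => t; rewrite cImD.
  exact: (continuousD (h2 x) (h4 x)).
Qed.

Lemma ccontM (F G : R -> C) : ccont F -> ccont G -> ccont (fun t => F t * G t).
Proof.
move=> [h1 h2] [h3 h4]; split => x.
- have -> : (fun t => cRe (F t * G t)) =
   (((fun t => cRe (F t)) \* (fun t => cRe (G t))) -
    ((fun t => cIm (F t)) \* (fun t => cIm (G t))))%R.
    by apply: funext => t; rewrite cReM.
  exact: (continuousB (continuousM (h1 x) (h3 x)) (continuousM (h2 x) (h4 x))).
- have -> : (fun t => cIm (F t * G t)) =
   (((fun t => cRe (F t)) \* (fun t => cIm (G t))) +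
    ((fun t => cIm (F t)) \* (fun t => cRe (G t))))%R.
    by apply: funext => t; rewrite cImM.
  exact: (continuousD (continuousM (h1 x) (h4 x)) (continuousM (h2 x) (h3 x))).
Qed.

Lemma ccont_sum (I : finType) (P : pred I) (F : I -> R -> C) :
  (forall i, ccont (F i)) -> ccont (fun t => \sum_(i | P i) F i t).
Proof.
move=> H.
suff: forall s : seq I, ccont (fun t => \sum_(i <- s | P i) F i t) by apply.
elim => [|i s IH].
  by apply: ccont_ext (ccont_cst 0) => t; rewrite big_nil.
have -> : (fun t => \sum_(j <- i :: s | P j) F j t) = (fun t => if P i then
  F i t + \sum_(j <- s | P j) F j t else \sum_(j <- s | P j) F j t).
  by apply: funext => t; rewrite big_cons.
by case: (P i) => //; exact: ccontD.
Qed.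

Lemma ccont_cexp_comp (z : C) (h : R -> R) : continuous h ->
  ccont (fun t => cexp (z * (h t)%:C)).
Proof.
move=> ch.
have [c1 c2] : ccont (fun u => cexp (z * u%:C)).
  by apply: ccont_cderiv => x; eexists; exact: cderiv_cexp.
split => x.
- exact: (continuous_comp (ch x) (c1 (h x))).
- exact: (continuous_comp (ch x) (c2 (h x))).
Qed.

Lemma cont_absdiff (x : R) : continuous (fun r : R => `|x - r|).
Proof.
move=> r.
apply: (continuous_comp (f := fun r => x - r) (g := Num.norm)).
  apply: continuousB; [exact: cst_continuous | done].
exact: norm_continuous.
Qed.

End S3.

Section S4.
Variable R : realType.
Local Notation C := R[i].
Local Notation cRe := (@complex.Re R).
Local Notation cIm := (@complex.Im R).
Local Notation mu := (@lebesgue_measure R).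

Lemma FTC_R (f F : R -> R) (a b : R) : a <= b -> continuous f ->
  (forall r : R, is_derive r 1 F (f r)) ->
  (\int[mu]_(x in `[a, b]) f x)%classic = F b - F a.
Proof.
move=> ab cf dF.
have cF : continuous F by apply: der_cont => x; exists (f x).
case: (eqVneq a b) => [<-|nab].
  by rewrite set_itv1 Rintegral_set1 subrr.
have lab : a < b by rewrite lt_neqAle nab.
have H := @continuous_FTC2 R f F a b lab (continuous_subspaceT cf).
rewrite /Rintegral H; first by rewrite -EFinB.
- split.
  + by move=> x _; case: (dF x).
  + exact: cvg_at_right_filter (cF a).
  + exact: cvg_at_left_filter (cF b).
- by move=> x _; rewrite derive1E; case: (dF x).
Qed.


Lemma Rint_piece (g gL GL : R -> R) (a b : R) : a <= b ->
  (forall r, a <= r <= b -> g r = gL r) -> continuous gL ->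
  (forall r : R, is_derive r 1 GL (gL r)) ->
  (\int[mu]_(x in `[a, b]) g x)%classic = GL b - GL a.
Proof.
move=> ab e cg dG; rewrite -(FTC_R ab cg dG).
apply: eq_Rintegral => r; rewrite inE /= in_itv /= => hr.
exact: e.
Qed.

Lemma Rint_split (g gL gR GL GR : R -> R) (x : R) : -1 <= x <= 1 ->
  continuous g ->
  (forall r, -1 <= r <= x -> g r = gL r) ->
  (forall r, x <= r <= 1 -> g r = gR r) ->
  continuous gL -> continuous gR ->
  (forall r : R, is_derive r 1 GL (gL r)) ->
  (forall r : R, is_derive r 1 GR (gR r)) ->
  (\int[mu]_(r in ([set r : R | -1 <= r <= 1])%classic) g r)%classic =
    (GL x - GL (-1)) + (GR 1 - GR x).
Proof.
move=> /andP[x1 x2] cg eL eR cL cR dL dR.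
have -> : ([set r : R | -1 <= r <= 1])%classic = (`[-1, 1])%classic.
  by rewrite set_itvcc.
have int : mu.-integrable (`[-1, 1])%classic (EFin \o g).
  apply: continuous_compact_integrable; first exact: segment_compact.
  exact: continuous_subspaceT.
have H := @Rintegral_itvB R g (BLeft (-1)) (BRight 1) x int.
rewrite !bnd_simp in H.
have {H} H := H x1 x2.
rewrite Rintegral_itv_obnd_cbnd in H; last first.
  apply: integrableS int => //; apply: subset_itvr; rewrite bnd_simp //.
rewrite -(Rint_piece x1 eL cL dL) -(Rint_piece x2 eR cR dR) -H.
by rewrite subrKC.
Qed.

Lemma complex_eqRI (u v : C) : cRe u = cRe v -> cIm u = cIm v -> u = v.
Proof. by case: u => a b; case: v => c d /= -> ->. Qed.

Lemma cint11_split (g gL gR GL GR : R -> C) (x : R) : -1 <= x <= 1 ->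
  ccont g ->
  (forall r, -1 <= r <= x -> g r = gL r) ->
  (forall r, x <= r <= 1 -> g r = gR r) ->
  ccont gL -> ccont gR ->
  (forall r, cderiv GL r (gL r)) -> (forall r, cderiv GR r (gR r)) ->
  cint11 g = (GL x - GL (-1)) + (GR 1 - GR x).
Proof.
move=> hx [c1 c2] eL eR [cL1 cL2] [cR1 cR2] dL dR.
rewrite /cint11.
have dL1 : forall r : R, is_derive r 1 (fun r => cRe (GL r)) (cRe (gL r)) by move=> r; case: (dL r).
have dL2 : forall r : R, is_derive r 1 (fun r => cIm (GL r)) (cIm (gL r)) by move=> r; case: (dL r).
have dR1 : forall r : R, is_derive r 1 (fun r => cRe (GR r)) (cRe (gR r)) by move=> r; case: (dR r).
have dR2 : forall r : R, is_derive r 1 (fun r => cIm (GR r)) (cIm (gR r)) by move=> r; case: (dR r).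
have eL1 : forall r, -1 <= r <= x -> cRe (g r) = cRe (gL r) by move=> r hr; rewrite eL.
have eL2 : forall r, -1 <= r <= x -> cIm (g r) = cIm (gL r) by move=> r hr; rewrite eL.
have eR1 : forall r, x <= r <= 1 -> cRe (g r) = cRe (gR r) by move=> r hr; rewrite eR.
have eR2 : forall r, x <= r <= 1 -> cIm (g r) = cIm (gR r) by move=> r hr; rewrite eR.
rewrite (Rint_split hx c1 eL1 eR1 cL1 cR1 dL1 dR1).
rewrite (Rint_split hx c2 eL2 eR2 cL2 cR2 dL2 dR2).
by apply: complex_eqRI; rewrite /= ?cReD ?cImD ?cReN ?cImN.
Qed.

End S4.

Section S5.
Variable R : realType.
Local Notation C := R[i].
Local Notation cRe := (@complex.Re R).
Local Notation cIm := (@complex.Im R).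

Definition has_int (x : R) (h : R -> C) (I : C) : Prop :=
  exists hL hR HL HR : R -> C,
  [/\ (forall r, -1 <= r <= x -> h r = hL r), (forall r, x <= r <= 1 -> h r = hR r),
      ccont hL /\ ccont hR, (forall r, cderiv HL r (hL r)) /\ (forall r, cderiv HR r (hR r)) &
      I = (HL x - HL (-1)) + (HR 1 - HR x)].

Lemma has_int_cint11 x h I : -1 <= x <= 1 -> ccont h -> has_int x h I -> cint11 h = I.
Proof.
move=> hx ch [hL [hR [HL [HR [e1 e2 [c1 c2] [d1 d2] ->]]]]].
exact: (cint11_split hx ch e1 e2 c1 c2 d1 d2).
Qed.

Lemma has_int_ext x h1 h2 I : (forall r, h1 r = h2 r) -> has_int x h1 I -> has_int x h2 I.
Proof. by move=> e; have -> : h2 = h1 by apply: funext => r; rewrite e. Qed.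

Lemma has_int0 x : has_int x (fun _ => 0) 0.
Proof.
exists (fun _ => 0), (fun _ => 0), (fun _ => 0), (fun _ => 0); split => //.
- by split; apply: ccont_cst.
- by split => r; apply: cderiv_cst.
- by rewrite !subrr addr0.
Qed.

Lemma has_intD x h1 h2 I1 I2 : has_int x h1 I1 -> has_int x h2 I2 ->
  has_int x (fun r => h1 r + h2 r) (I1 + I2).
Proof.
move=> [hL [hR [HL [HR [e1 e2 [c1 c2] [d1 d2] ->]]]]].
move=> [hL' [hR' [HL' [HR' [e1' e2' [c1' c2'] [d1' d2'] ->]]]]].
exists (fun r => hL r + hL' r), (fun r => hR r + hR' r),
  (fun r => HL r + HL' r), (fun r => HR r + HR' r); split.
- by move=> r hr; rewrite e1 // e1'.
- by move=> r hr; rewrite e2 // e2'.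
- by split; apply: ccontD.
- by split => r; apply: cderivD.
- ring.
Qed.

Lemma has_intZ x (a : C) h I : has_int x h I -> has_int x (fun r => a * h r) (a * I).
Proof.
move=> [hL [hR [HL [HR [e1 e2 [c1 c2] [d1 d2] ->]]]]].
exists (fun r => a * hL r), (fun r => a * hR r),
  (fun r => a * HL r), (fun r => a * HR r); split.
- by move=> r hr; rewrite e1.
- by move=> r hr; rewrite e2.
- by split; apply: ccontM => //; apply: ccont_cst.
- by split => r; apply: cderivZ.
- ring.
Qed.

Lemma has_int_sum x (I : finType) (P : pred I) (h : I -> R -> C) (J : I -> C) :
  (forall i, has_int x (h i) (J i)) ->
  has_int x (fun r => \sum_(i | P i) h i r) (\sum_(i | P i) J i).
Proof.
move=> H.
suff: forall s : seq I, has_int x (fun r => \sum_(i <- s | P i) h i r) (\sum_(i <- s | P i) J i).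
  by apply.
elim => [|i s IH].
  by rewrite big_nil; apply: has_int_ext (has_int0 x) => t; rewrite big_nil.
rewrite big_cons.
have -> : (fun t => \sum_(j <- i :: s | P j) h j t) = (fun t => if P i then
  h i t + \sum_(j <- s | P j) h j t else \sum_(j <- s | P j) h j t).
  by apply: funext => t; rewrite big_cons.
by case: (P i) => //; exact: has_intD.
Qed.

Lemma ccont_cexp (z : C) : ccont (fun t => cexp (z * t%:C)).
Proof. by apply: ccont_cderiv => x; eexists; exact: cderiv_cexp. Qed.

Lemma cderiv_eqd F r (d d' : C) : cderiv F r d -> d = d' -> cderiv F r d'.
Proof. by move=> h <-. Qed.

Lemma cderiv_Zexp (a z : C) r :
  cderiv (fun t => a * cexp (z * t%:C)) r (a * (z * cexp (z * r%:C))).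
Proof. exact: cderivZ (cderiv_cexp z r). Qed.

Lemma ccont_Zexp (a z : C) : ccont (fun t => a * cexp (z * t%:C)).
Proof. by apply: ccontM; [apply: ccont_cst | apply: ccont_cexp]. Qed.

Definition Iexp (x : R) (k s : C) : C :=
  cexp (s * x%:C) * (2%:R * k / ((k - s) * (k + s)))
  - cexp (- k * (x + 1)%:C) * (cexp (- s) / (k + s))
  - cexp (k * (x - 1)%:C) * (cexp s / (k - s)).

Lemma has_int_exp (x : R) (k s : C) : k + s != 0 -> k - s != 0 ->
  has_int x (fun r => cexp (- k * (`|x - r|)%:C) * cexp (s * r%:C)) (Iexp x k s).
Proof.
move=> nz1 nz2.
have nz3 : s - k != 0 by rewrite -opprB oppr_eq0.
exists (fun r => cexp (- k * x%:C) * cexp ((k + s) * r%:C)),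
  (fun r => cexp (k * x%:C) * cexp ((s - k) * r%:C)),
  (fun r => cexp (- k * x%:C) / (k + s) * cexp ((k + s) * r%:C)),
  (fun r => cexp (k * x%:C) / (s - k) * cexp ((s - k) * r%:C)); split.
- move=> r /andP[_ hr]; rewrite ger0_norm ?subr_ge0 // -!cexpD; congr cexp.
  rewrite rmorphB; ring.
- move=> r /andP[hr _]; rewrite distrC ger0_norm ?subr_ge0 // -!cexpD; congr cexp.
  rewrite rmorphB; ring.
- by split; apply: ccont_Zexp.
- split => r.
  + apply: cderiv_eqd (cderiv_Zexp _ _ r) _; field; exact: nz1.
  + apply: cderiv_eqd (cderiv_Zexp _ _ r) _; field; exact: nz3.
- have e1 : cexp (- k * x%:C) * cexp ((k + s) * x%:C) = cexp (s * x%:C).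
    by rewrite -cexpD; congr cexp; ring.
  have e2 : cexp (- k * x%:C) * cexp ((k + s) * (-1)%:C) = cexp (- k * (x + 1)%:C) * cexp (- s).
    by rewrite -!cexpD; congr cexp; rewrite rmorphD rmorphN rmorph1; ring.
  have e3 : cexp (k * x%:C) * cexp ((s - k) * 1%:C) = cexp (k * (x - 1)%:C) * cexp s.
    by rewrite -!cexpD; congr cexp; rewrite rmorphB rmorph1; ring.
  have e4 : cexp (k * x%:C) * cexp ((s - k) * x%:C) = cexp (s * x%:C).
    by rewrite -cexpD; congr cexp; ring.
  rewrite /Iexp.
  rewrite [cexp (- k * x%:C) / _ * cexp ((k + s) * x%:C)]mulrAC e1.
  rewrite [cexp (- k * x%:C) / _ * cexp ((k + s) * _)]mulrAC e2.
  rewrite [cexp (k * x%:C) / _ * cexp ((s - k) * 1%:C)]mulrAC e3.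
  rewrite [cexp (k * x%:C) / _ * cexp ((s - k) * x%:C)]mulrAC e4.
  field; apply/andP; split => //; apply/andP; split => //.
Qed.

End S5.

Section S6.
Variable R : realType.
Local Notation C := R[i].
Local Notation cRe := (@complex.Re R).
Local Notation cIm := (@complex.Im R).
Variables (N : nat) (alpha tau0 : R) (c mu : 'I_N -> C) (lam : C) (rho : 'I_N -> C).
Variable Gam : 'cV[C]_(N + N).
Local Notation k := (kk mu lam).
Local Notation gp l := (Gam (lshift N l) 0).
Local Notation gm l := (Gam (rshift N l) 0).

Lemma root_sum (z : C) : Pchar alpha tau0 c mu lam z = 0 ->
  (forall i, k i - z != 0 /\ k i + z != 0) ->
  cexp (- lam * tau0%:C) * \sum_(i < N) c i * (2%:R * k i / ((k i - z) * (k i + z)))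
   = lam + alpha%:C.
Proof.
move=> P0 nz.
set D := fun j => z ^+ 2 - k j ^+ 2.
have Dnz j : D j != 0.
  have [h1 h2] := nz j.
  rewrite /D (_ : z ^+ 2 - k j ^+ 2 = - ((k j - z) * (k j + z))); last by ring.
  by rewrite oppr_eq0 mulf_neq0.
have PD : \prod_(j < N) D j != 0 by apply/prodf_neq0 => j _.
set A := cexp (lam * tau0%:C) * (lam + alpha%:C) / 2%:R.
have e1 : Pchar alpha tau0 c mu lam z =
   \prod_(j < N) D j * (A + \sum_(i < N) c i * k i / D i).
  rewrite /Pchar -/A mulrDr [A * _]mulrC; congr (_ + _).
  rewrite mulr_sumr; apply: eq_bigr => i _.
  rewrite [in RHS](bigD1 i) //=; field; exact: Dnz.
move: P0; rewrite e1 => /eqP; rewrite mulf_eq0 (negbTE PD) /= => /eqP hA.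
have e2 : \sum_(i < N) c i * (2%:R * k i / ((k i - z) * (k i + z)))
        = - 2%:R * \sum_(i < N) c i * k i / D i.
  rewrite mulr_sumr; apply: eq_bigr => i _.
  have [h1 h2] := nz i.
  have := Dnz i; rewrite /D => hD.
  by field; rewrite hD h1 h2.
have hs : \sum_(i < N) c i * k i / D i = - A by apply/eqP; rewrite -addr_eq0 addrC hA.
rewrite e2 hs /A !mulNr cexpN.
have := cexp_neq0 (lam * tau0%:C).
move: (cexp (lam * tau0%:C)) => E hE.
field; exact: hE.
Qed.

Definition hfun (x : R) (kk0 s : C) (r : R) : C :=
  cexp (- kk0 * (`|x - r|)%:C) * cexp (s * r%:C).

Lemma term_alg (c0 X B E0 Y g1 g2 E1 E2 : C) : X * B = E0 * Y ->
  c0 * X * (B * (g1 * E1 + g2 * E2)) = c0 * E0 * g1 * (Y * E1) + c0 * E0 * g2 * (Y * E2).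
Proof.
move=> e; rewrite (_ : c0 * X * (B * _) = c0 * (X * B) * (g1 * E1 + g2 * E2)); last by ring.
rewrite e; ring.
Qed.

Lemma integrand_eq (x r : R) :
  Jker c mu x r * eps_tensor lam (qfun rho Gam) (- tau0 - `|x - r|) r =
  \sum_(i < N) \sum_(l < N)
     ((c i * cexp (- lam * tau0%:C) * gp l) * hfun x (k i) (rho l) r
    + (c i * cexp (- lam * tau0%:C) * gm l) * hfun x (k i) (- rho l) r).
Proof.
rewrite /Jker /eps_tensor /qfun mulr_suml; apply: eq_bigr => i _.
rewrite !mulr_sumr; apply: eq_bigr => l _.
apply: term_alg.
rewrite -!cexpD; congr cexp; rewrite /kk rmorphB rmorphN; ring.
Qed.

Lemma term_decomp (x : R) (kk0 r0 c0 E0 g1 g2 : C) : kk0 - r0 != 0 -> kk0 + r0 != 0 ->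
 (c0 * E0 * g1) * Iexp x kk0 r0 + (c0 * E0 * g2) * Iexp x kk0 (- r0) =
 (g1 * cexp (r0 * x%:C) + g2 * cexp (- r0 * x%:C)) *
    (E0 * (c0 * (2%:R * kk0 / ((kk0 - r0) * (kk0 + r0)))))
 - c0 * E0 * cexp (- kk0 * (x + 1)%:C) *
    (g1 * (cexp (- r0) / (kk0 + r0)) + g2 * (cexp r0 / (kk0 - r0)))
 - c0 * E0 * cexp (kk0 * (x - 1)%:C) *
    (g1 * (cexp r0 / (kk0 - r0)) + g2 * (cexp (- r0) / (kk0 + r0))).
Proof.
move=> h1 h2; rewrite /Iexp !opprK.
by field; rewrite h1 h2.
Qed.

Lemma row_top : Smat mu lam rho *m Gam = 0 -> forall i,
  \sum_(l < N) (gp l * (cexp (rho l) / (k i - rho l)) + gm l * (cexp (- rho l) / (k i + rho l))) = 0.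
Proof.
move=> H i.
have := congr1 (fun M : 'cV[C]_(N + N) => M (lshift N i) 0) H.
rewrite !mxE big_split_ord /= /Smat.
under eq_bigr do rewrite block_mxEul mxE.
under [X in _ + X]eq_bigr do rewrite block_mxEur mxE.
rewrite -big_split /= => H0; rewrite -[RHS]H0; apply: eq_bigr => l _; rewrite /kk; ring.
Qed.

Lemma row_bot : Smat mu lam rho *m Gam = 0 -> forall i,
  \sum_(l < N) (gp l * (cexp (- rho l) / (k i + rho l)) + gm l * (cexp (rho l) / (k i - rho l))) = 0.
Proof.
move=> H i.
have := congr1 (fun M : 'cV[C]_(N + N) => M (rshift N i) 0) H.
rewrite !mxE big_split_ord /= /Smat.
under eq_bigr do rewrite block_mxEdl mxE.
under [X in _ + X]eq_bigr do rewrite block_mxEdr mxE.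
rewrite -big_split /= => H0; rewrite -[RHS]H0; apply: eq_bigr => l _; rewrite /kk; ring.
Qed.

Lemma ccont_hfun x kk0 s0 : ccont (hfun x kk0 s0).
Proof.
rewrite /hfun; apply: ccontM; last exact: ccont_cexp.
by apply: ccont_ext (ccont_cexp_comp (- kk0) (@cont_absdiff R x)) => t.
Qed.

Lemma Lop_eq (x : R) : -1 <= x <= 1 ->
  (forall i l, k i != rho l /\ k i != - rho l) ->
  (forall l, Pchar alpha tau0 c mu lam (rho l) = 0) ->
  Smat mu lam rho *m Gam = 0 ->
  Lop c mu tau0 (eps_tensor lam (qfun rho Gam)) x = (lam + alpha%:C) * qfun rho Gam x.
Proof.
move=> hx hk hP hS.
have nz1 i l : k i - rho l != 0 by rewrite subr_eq0; case: (hk i l).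
have nz2 i l : k i + rho l != 0 by rewrite addr_eq0; case: (hk i l).
rewrite /Lop.
have -> : (fun r => Jker c mu x r * eps_tensor lam (qfun rho Gam) (- tau0 - `|x - r|) r) =
  (fun r => \sum_(i < N) \sum_(l < N)
     ((c i * cexp (- lam * tau0%:C) * gp l) * hfun x (k i) (rho l) r
    + (c i * cexp (- lam * tau0%:C) * gm l) * hfun x (k i) (- rho l) r)).
  by apply: funext => r; rewrite integrand_eq.
rewrite (@has_int_cint11 _ x _ (\sum_(i < N) \sum_(l < N)
     ((c i * cexp (- lam * tau0%:C) * gp l) * Iexp x (k i) (rho l)
    + (c i * cexp (- lam * tau0%:C) * gm l) * Iexp x (k i) (- rho l))) hx).
- under eq_bigr do under eq_bigr do rewrite term_decomp //.
  under eq_bigr do rewrite !sumrB.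
  rewrite !sumrB.
  rewrite [X in _ - X - _](eq_bigr (fun i => 0)); last first.
    by move=> i _; rewrite -mulr_sumr row_bot // mulr0.
  rewrite [X in _ - X](eq_bigr (fun i => 0)); last first.
    by move=> i _; rewrite -mulr_sumr row_top // mulr0.
  rewrite !big1_eq !subr0 exchange_big /qfun mulr_sumr; apply: eq_bigr => l _.
  rewrite -mulr_sumr -mulr_sumr root_sum; first by rewrite mulrC.
    exact: hP.
  by move=> i; split.
- apply: ccont_sum => i; apply: ccont_sum => l.
  by apply: ccontD; apply: ccontM; (apply: ccont_cst || apply: ccont_hfun).
- apply: has_int_sum => i; apply: has_int_sum => l.
  apply: has_intD; apply: has_intZ; apply: has_int_exp => //.
  by rewrite opprK.
Qed.


End S6.

Section S7.
Variable R : realType.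
Local Notation C := R[i].
Local Notation cRe := (@complex.Re R).
Local Notation cIm := (@complex.Im R).

Lemma cont_eps (f : R -> R) (x : R) : {for x, continuous f} ->
  forall e : R, 0 < e -> exists2 d : R, 0 < d &
    forall y, `|y - x| < d -> `|f y - f x| < e.
Proof.
move=> cf e e0.
move/cvgrPdist_lt: cf => /(_ e e0) H1.
have [d /= d0 H] := proj1 (nbhs_ballP _ _) H1.
exists d => // y yx; rewrite distrC; apply: H.
by rewrite -ball_normE /= distrC.
Qed.

Lemma deriv_eps (f : R -> R) (x df : R) : is_derive x 1 f df ->
  forall e : R, 0 < e -> exists2 d : R, 0 < d &
    forall t, 0 < `|t| < d -> `|(f (x + t) - f x) / t - df| < e.
Proof.
move=> [fd <-] e e0.
move/cvgrPdist_lt: fd => /(_ e e0) H1.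
rewrite near_withinE in H1.
have [d /= d0 H] := proj1 (nbhs_ballP _ _) H1.
exists d => // t /andP[t0 td].
have := H t; rewrite -ball_normE /= sub0r normrN => /(_ td).
rewrite normr_gt0 in t0 => /(_ t0).
by rewrite distrC /= scaler1 [t + x]addrC mulrC.
Qed.

Lemma normC_R (a : R) : `|a%:C| = `|a|%:C :> C.
Proof. by rewrite normc_def /= expr0n addr0 sqrtr_sqr. Qed.

Lemma normC_i : `|'i%C| = 1 :> C.
Proof. by rewrite normc_def /= expr0n expr1n add0r sqrtr1. Qed.

Lemma normC_le (z : C) : `|z| <= (`|cRe z| + `|cIm z|)%:C.
Proof.
rewrite {1}[z]complexE rmorphD /=.
apply: le_trans (ler_normD _ _) _.
by rewrite normrM normC_i mul1r !normC_R.
Qed.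

Lemma normC_real (z : C) : `|z| = (cRe `|z|)%:C.
Proof. by rewrite normc_def. Qed.

Lemma normC_Re_ge0 (z : C) : 0 <= cRe `|z|.
Proof. by rewrite normc_def /= sqrtr_ge0. Qed.

Lemma normC_cexp (w : C) : `|cexp w| = (expR (cRe w))%:C.
Proof.
rewrite normc_def Recexp Imcexp !exprMn -mulrDr cos2Dsin2 mulr1 sqrtr_sqr.
by rewrite ger0_norm // ltW // expR_gt0.
Qed.

Lemma cRe_divR (z : C) (t : R) : cRe (z / t%:C) = cRe z / t.
Proof. by rewrite -fmorphV cReM /= mulr0 subr0. Qed.

Lemma cIm_divR (z : C) (t : R) : cIm (z / t%:C) = cIm z / t.
Proof. by rewrite -fmorphV cImM /= mulr0 add0r. Qed.

Lemma ccont_eps (F : R -> C) (x : R) : ccont F ->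
  forall e : R, 0 < e -> exists2 d : R, 0 < d &
    forall y, `|y - x| < d -> `|F y - F x| < e%:C.
Proof.
move=> [c1 c2] e e0.
have e20 : 0 < e / 2 by rewrite divr_gt0.
have [d1 d10 H1] := cont_eps (c1 x) e20.
have [d2 d20 H2] := cont_eps (c2 x) e20.
exists (Num.min d1 d2); first by rewrite lt_min d10 d20.
move=> y; rewrite lt_min => /andP[y1 y2].
apply: le_lt_trans (normC_le _) _; rewrite ltcR cReD cImD cReN cImN.
have := H1 y y1; have := H2 y y2; lra.
Qed.

Lemma cderiv_eps (F : R -> C) (x : R) (dF : C) : cderiv F x dF ->
  forall e : R, 0 < e -> exists2 d : R, 0 < d &
    forall t, 0 < `|t| < d -> `|(F (x + t) - F x) / t%:C - dF| < e%:C.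
Proof.
move=> [c1 c2] e e0.
have e20 : 0 < e / 2 by rewrite divr_gt0.
have [d1 d10 H1] := deriv_eps c1 e20.
have [d2 d20 H2] := deriv_eps c2 e20.
exists (Num.min d1 d2); first by rewrite lt_min d10 d20.
move=> t /andP[t0]; rewrite lt_min => /andP[y1 y2].
apply: le_lt_trans (normC_le _) _.
rewrite ltcR cReD cImD cReN cImN cRe_divR cIm_divR cReD cImD cReN cImN.
have := H1 t; rewrite t0 y1 => /(_ isT); have := H2 t; rewrite t0 y2 => /(_ isT).
lra.
Qed.

End S7.

Section S8.
Variable R : realType.
Local Notation C := R[i].
Local Notation cRe := (@complex.Re R).
Local Notation cIm := (@complex.Im R).

Definition qbounded (q : R -> C) : Prop :=
  exists2 B : R, 0 <= B & forall x, -1 <= x <= 1 -> `|q x| <= B%:C.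

Lemma exp_bound (z : C) (x : R) : -1 <= x <= 1 ->
  `|cexp (z * x%:C)| <= (expR `|cRe z|)%:C.
Proof.
move=> /andP[x1 x2].
rewrite normC_cexp lecR ler_expR cReM /= mulr0 subr0.
apply: le_trans (ler_norm _) _; rewrite normrM.
rewrite -[leRHS]mulr1 ler_wpM2l //; rewrite ler_norml; lra.
Qed.

Lemma qfun_bounded (N : nat) (rho : 'I_N -> C) (Gam : 'cV[C]_(N + N)) :
  qbounded (qfun rho Gam).
Proof.
exists (\sum_(l < N) (cRe `|Gam (lshift N l) 0| + cRe `|Gam (rshift N l) 0|)
            * expR `|cRe (rho l)|).
  apply: sumr_ge0 => l _; apply: mulr_ge0; last exact/ltW/expR_gt0.
  by apply: addr_ge0; apply: normC_Re_ge0.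
move=> x hx; rewrite /qfun rmorph_sum.
apply: le_trans (ler_norm_sum _ _ _) _; apply: ler_sum => l _.
apply: le_trans (ler_normD _ _) _.
rewrite (normrM (Gam (lshift N l) 0)) (normrM (Gam (rshift N l) 0)) [`|Gam (lshift N l) 0|]normC_real [`|Gam (rshift N l) 0|]normC_real.
have h1 := exp_bound (rho l) hx.
have h2 := exp_bound (- rho l) hx.
rewrite cReN normrN in h2.
have a0 := normC_Re_ge0 (Gam (lshift N l) 0).
have b0 := normC_Re_ge0 (Gam (rshift N l) 0).
rewrite rmorphM rmorphD mulrDl.
by apply: lerD; apply: ler_wpM2l; rewrite ?ler0c.
Qed.

Lemma bound_mul (a b : C) (e B : R) : 0 <= B -> 0 < e -> `|a| < (e / (B + 1))%:C ->
  `|b| <= B%:C -> `|a * b| <= e%:C.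
Proof.
move=> B0 e0 ha hb; rewrite normrM.
apply: le_trans (ler_pM (normr_ge0 _) (normr_ge0 _) (ltW ha) hb) _.
rewrite -rmorphM lecR.
have B1 : 0 < B + 1 by lra.
rewrite mulrAC ler_pdivrMr // ler_pM2l //; lra.
Qed.

Lemma inY_ccont (q : R -> C) : ccont q -> in_Y q.
Proof.
move=> cq x _ e e0; have [d d0 H] := ccont_eps x cq e0.
by exists d => // y _; apply: H.
Qed.

Lemma inX_eps (h : R) (lam : C) (q : R -> C) : ccont q -> qbounded q ->
  in_X h (eps_tensor lam q).
Proof.
move=> cq [B B0 hB]; split.
  move=> th _; apply: inY_ccont; rewrite /eps_tensor.
  by apply: ccontM => //; apply: ccont_cst.
move=> th _ e e0.
have e1 : 0 < e / (B + 1) by rewrite divr_gt0 //; lra.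
have [d d0 H] := ccont_eps th (ccont_cexp lam) e1.
exists d => // th' _ hth x hx.
rewrite /eps_tensor -mulrBl.
exact: bound_mul B0 e0 (H th' hth) (hB x hx).
Qed.

Lemma derX_eps (h : R) (lam : C) (q : R -> C) : qbounded q ->
  is_derX h (eps_tensor lam q) (fun th x => lam * eps_tensor lam q th x).
Proof.
move=> [B B0 hB] th _ e e0.
have e1 : 0 < e / (B + 1) by rewrite divr_gt0 //; lra.
have [d d0 H] := cderiv_eps (cderiv_cexp lam th) e1.
exists d => // t _ ht x hx.
rewrite /eps_tensor.
have -> : (cexp (lam * (th + t)%:C) * q x - cexp (lam * th%:C) * q x) / t%:C -
    lam * (cexp (lam * th%:C) * q x) =
   ((cexp (lam * (th + t)%:C) - cexp (lam * th%:C)) / t%:C - lam * cexp (lam * th%:C)) * q x.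
  by ring.
exact: bound_mul B0 e0 (H t ht) (hB x hx).
Qed.

End S8.

Section S9.
Variable R : realType.
Local Notation C := R[i].
Local Notation cRe := (@complex.Re R).
Local Notation cIm := (@complex.Im R).

Lemma cexp_eq1_small (u : C) (d : R) : 0 < d -> `|cIm u| * d < 2 ->
  cexp (u * d%:C) = 1 -> u = 0.
Proof.
move=> d0 hb e.
have eRe : cRe (u * d%:C) = cRe u * d by rewrite cReM /= mulr0 subr0.
have eIm : cIm (u * d%:C) = cIm u * d by rewrite cImM /= mulr0 add0r.
have e1 := congr1 cRe e; have e2 := congr1 cIm e.
rewrite Recexp eRe /= in e1; rewrite Imcexp eRe eIm /= in e2.
have s0 : sin (cIm u * d) = 0.
  by move/eqP: e2; rewrite mulf_eq0 expR_eq0 /= => /eqP.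
have b0 : cIm u * d = 0.
  case: (ltgtP (cIm u * d) 0) => // hb2.
  - have : 0 < sin (- (cIm u * d)).
      apply: sin2_gt0; apply/andP; split; first by rewrite oppr_gt0.
      apply: le_lt_trans hb.
      by rewrite -mulNr; apply: ler_wpM2r; [exact: ltW | rewrite -normrN; exact: ler_norm].
    by rewrite sinN s0 oppr0 ltxx.
  - have : 0 < sin (cIm u * d).
      apply: sin2_gt0; apply/andP; split => //.
      by apply: le_lt_trans hb; apply: ler_wpM2r; [exact: ltW | exact: ler_norm].
    by rewrite s0 ltxx.
rewrite eIm b0 cos0 mulr1 in e1.
have a0 : cRe u * d = 0 by apply: expR_inj; rewrite e1 expR0.
have hIm : cIm u = 0 by move/eqP: b0; rewrite mulf_eq0 (gt_eqF d0) orbF => /eqP.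
have hRe : cRe u = 0 by move/eqP: a0; rewrite mulf_eq0 (gt_eqF d0) orbF => /eqP.
by apply: complex_eqRI; [rewrite hRe | rewrite hIm].
Qed.

Lemma le_sum_term (I : finType) (F : I -> R) (j : I) :
  (forall i, 0 <= F i) -> F j <= \sum_i F i.
Proof. by move=> h; rewrite (bigD1 j) //= lerDl sumr_ge0. Qed.

Lemma cexp_nat (z : C) (n : nat) (d : R) :
  cexp (z * (n%:R * d)%:C) = cexp (z * d%:C) ^+ n.
Proof. by rewrite -cexpMn rmorphM rmorph_nat mulrCA mulr_natl. Qed.

Lemma exp_sum_nonzero (M : nat) (a : 'rV[C]_M) (v : 'cV[C]_M) :
  (forall s t, a 0 s = a 0 t -> s = t) -> v != 0 ->
  exists x : R, -1 <= x <= 1 /\ \sum_(t < M) v t 0 * cexp (a 0 t * x%:C) != 0.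
Proof.
case: M a v => [|M] a v ainj vnz.
  by move: vnz; rewrite (flatmx0 v) eqxx.
set Mi := \sum_(s < M.+1) \sum_(t < M.+1) `|cIm (a 0 s - a 0 t)|.
have Mi0 : 0 <= Mi by apply: sumr_ge0 => s _; apply: sumr_ge0.
have M0 : 0 < (M.+1)%:R :> R by rewrite ltr0n.
set d := ((M.+1)%:R * (1 + Mi))^-1.
have dpos : 0 < d by rewrite invr_gt0 mulr_gt0 //; lra.
have hMd : Mi * d < 1.
  rewrite /d ltr_pdivrMr ?mulr_gt0 //; last lra.
  rewrite mul1r; have : 1 <= (M.+1)%:R :> R by rewrite ler1n.
  nra.
have hb s t : `|cIm (a 0 s - a 0 t)| * d < 2.
  have h1 : `|cIm (a 0 s - a 0 t)| <= Mi.
    have e1 := @le_sum_term _ (fun t => `|cIm (a 0 s - a 0 t)|) t (fun _ => normr_ge0 _).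
    have e2 := @le_sum_term _ (fun s => \sum_(t < M.+1) `|cIm (a 0 s - a 0 t)|) s
              (fun i => sumr_ge0 _ (fun j _ => normr_ge0 _)).
    exact: le_trans e1 e2.
  have := ler_wpM2r (ltW dpos) h1; lra.
set w : 'rV[C]_M.+1 := \row_t cexp (a 0 t * d%:C).
set V := Vandermonde M.+1 w.
have detV : \det V != 0.
  rewrite det_Vandermonde; apply/prodf_neq0 => i _; apply/prodf_neq0 => j ij.
  rewrite !mxE subr_eq0; apply/eqP => e.
  have e1 : cexp ((a 0 j - a 0 i) * d%:C) = 1.
    rewrite mulrBl cexpD cexpN e mulfV //; exact: cexp_neq0.
  have := cexp_eq1_small dpos (hb j i) e1.
  move/eqP; rewrite subr_eq0 => /eqP /ainj eji.
  by move: ij; rewrite eji ltnn.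
have Vu : V \in unitmx by rewrite unitmxE unitfE.
have [[n hn]|H] := pselect (exists n : 'I_M.+1,
    \sum_(t < M.+1) v t 0 * cexp (a 0 t * (n%:R * d)%:C) != 0).
  exists (n%:R * d); split => //.
  apply/andP; split; first by apply: le_trans (_ : 0 <= _); [lra | apply: mulr_ge0 => //; lra].
  have hn1 : (n%:R : R) <= M%:R by rewrite ler_nat -ltnS.
  have hM : (M%:R : R) * d <= 1.
    rewrite /d ler_pdivrMr ?mulr_gt0 //; last lra.
    have : (0 : R) <= M%:R by rewrite ler0n.
    rewrite mul1r -natr1; nra.
  have := ler_wpM2r (ltW dpos) hn1; lra.
exfalso; move/eqP: vnz; apply.
have H0 : V *m v = 0.
  apply/matrixP => n k; rewrite (ord1 k) !mxE.
  have : \sum_(t < M.+1) v t 0 * cexp (a 0 t * (n%:R * d)%:C) = 0.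
    by apply/eqP; apply/negPn/negP => hn; apply: H; exists n.
  move=> H1; rewrite -[RHS]H1; apply: eq_bigr => t _; rewrite !mxE cexp_nat mulrC.
  done.
by rewrite -(mulKmx Vu v) H0 mulmx0.
Qed.


Lemma qfun_nonzero (N : nat) (rho : 'I_N -> C) (Gam : 'cV[C]_(N + N)) :
  (forall i j : 'I_N, i != j -> rho i != rho j /\ rho i != - rho j) ->
  (forall i : 'I_N, rho i != - rho i) -> Gam != 0 ->
  exists x : R, -1 <= x <= 1 /\ qfun rho Gam x != 0.
Proof.
move=> hd hn Gnz.
set a : 'rV[C]_(N + N) := row_mx (\row_l rho l) (\row_l - rho l).
have ainj : forall s t, a 0 s = a 0 t -> s = t.
  move=> s t.
  have key : forall i j : 'I_N, rho i = rho j -> i = j.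
    move=> i j e; apply/eqP; apply/negP => /negP ij.
    by have [h _] := hd i j ij; move: h; rewrite e eqxx.
  have key2 : forall i j : 'I_N, rho i = - rho j -> False.
    move=> i j e; case: (eqVneq i j) => [ij|ij].
      by move: (hn i); rewrite {1}e ij eqxx.
    by have [_ h] := hd i j ij; move: h; rewrite e eqxx.
  case: (split_ordP s) => s' ->; case: (split_ordP t) => t' ->;
    rewrite /a ?row_mxEl ?row_mxEr !mxE.
  - by move/key ->.
  - by move/key2.
  - by move=> e; exfalso; apply: (key2 t' s'); rewrite -e.
  - by move/oppr_inj/key ->.
have [x [hx hq]] := exp_sum_nonzero ainj Gnz.
exists x; split => //; move: hq.
rewrite big_split_ord /qfun big_split /=.
by rewrite /a; under eq_bigr do rewrite row_mxEl mxE; under [X in _ + X]eq_bigr do rewrite row_mxEr mxE.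
Qed.

End S9.

Section S10.
Variable R : realType.
Local Notation C := R[i].
Local Notation cRe := (@complex.Re R).
Local Notation cIm := (@complex.Im R).

Lemma qboundedZ (a : C) (q : R -> C) : qbounded q -> qbounded (fun x => a * q x).
Proof.
move=> [B B0 hB]; exists (cRe `|a| * B); first by rewrite mulr_ge0 // normC_Re_ge0.
move=> x hx; rewrite normrM.
apply: le_trans (ler_wpM2l (normr_ge0 a) (hB x hx)) _.
by rewrite [X in X * _]normC_real rmorphM.
Qed.

Lemma ccont_qfun (N : nat) (rho : 'I_N -> C) (Gam : 'cV[C]_(N + N)) : ccont (qfun rho Gam).
Proof.
rewrite /qfun; apply: ccont_sum => l.
by apply: ccontD; apply: ccontM; (apply: ccont_cst || apply: ccont_cexp).
Qed.

Lemma eig_main (N : nat) (alpha tau0 : R) (c mu : 'I_N -> C) (lam : C) (rho : 'I_N -> C)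
  (Gam : 'cV[C]_(N + N)) :
  0 <= tau0 ->
  (forall i j : 'I_N, i != j -> rho i != rho j /\ rho i != - rho j) ->
  (forall i : 'I_N, rho i != - rho i) ->
  (forall l, Pchar alpha tau0 c mu lam (rho l) = 0) ->
  (forall i j : 'I_N, kk mu lam j != rho i /\ kk mu lam j != - rho i) ->
  Gam != 0 -> Smat mu lam rho *m Gam = 0 ->
  is_eigenfunction alpha tau0 c mu lam (eps_tensor lam (qfun rho Gam)).
Proof.
move=> tau0_ge0 hd hn hP hk Gnz hS.
have cq := ccont_qfun rho Gam.
have bq := qfun_bounded rho Gam.
have e0 : forall x, eps_tensor lam (qfun rho Gam) 0 x = qfun rho Gam x.
  by move=> x; rewrite /eps_tensor rmorph0 mulr0 cexp0 mul1r.
split; last first.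
  have [x [hx hq]] := qfun_nonzero hd hn Gnz.
  exists 0, x; split => //; last by rewrite e0.
  by rewrite lexx andbT oppr_le0; lra.
split.
- exact: inX_eps.
- have -> : (fun th x => lam * eps_tensor lam (qfun rho Gam) th x) =
     eps_tensor lam (fun x => lam * qfun rho Gam x).
    by apply: funext => th; apply: funext => x; rewrite /eps_tensor; ring.
  apply: inX_eps; last exact: qboundedZ.
  by apply: ccontM => //; apply: ccont_cst.
- exact: derX_eps.
- move=> x hx; rewrite !e0 (@Lop_eq R N alpha tau0 c mu lam rho Gam x hx) //; first by ring.
Qed.

End S10.

Unset Implicit Arguments.

Theorem theorem3p17 (R : realType) (N : nat) (alpha tau0 : R)
    (c mu : 'I_N -> R[i]) (lam : R[i]) (rho : 'I_N -> R[i]) :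
  (0 < N)%N -> 0 < alpha -> 0 <= tau0 ->
  (forall i, c i != 0) ->
  injective mu ->
  (* lam not in the exceptional set S *)
  (forall i j : 'I_N, i != j -> kk mu lam i ^+ 2 != kk mu lam j ^+ 2) ->
  (* P has 2N distinct roots, namely +- rho_i *)
  (forall i j : 'I_N, i != j -> rho i != rho j /\ rho i != - rho j) ->
  (forall i : 'I_N, rho i != - rho i) ->
  (forall z : R[i], Pchar alpha tau0 c mu lam z = 0 <->
                    exists i, z = rho i \/ z = - rho i) ->
  \det (Smat mu lam rho) = 0 ->
  (forall i j : 'I_N, kk mu lam j != rho i /\ kk mu lam j != - rho i) ->
  in_point_spectrum alpha tau0 c mu lam /\
  (forall Gam : 'cV[R[i]]_(N + N), Gam != 0 -> Smat mu lam rho *m Gam = 0 ->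
     is_eigenfunction alpha tau0 c mu lam (eps_tensor lam (qfun rho Gam))).
Proof.
move=> _ _ tau0_ge0 _ _ _ hd hn hroots hdet hk.
have hP : forall l, Pchar alpha tau0 c mu lam (rho l) = 0.
  by move=> l; apply/hroots; exists l; left.
have H2 : forall Gam : 'cV[R[i]]_(N + N), Gam != 0 -> Smat mu lam rho *m Gam = 0 ->
     is_eigenfunction alpha tau0 c mu lam (eps_tensor lam (qfun rho Gam)).
  by move=> Gam Gnz hS; apply: eig_main.
split => //.
have : \det (Smat mu lam rho)^T == 0 by rewrite det_tr hdet.
case/det0P => v vnz hv.
exists (eps_tensor lam (qfun rho v^T)); apply: H2.
  by apply: contra vnz => /eqP e; rewrite -(trmxK v) e trmx0.
by apply: trmx_inj; rewrite trmx_mul trmxK hv trmx0.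
Qed.
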